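(* Let $k$ be a commutative associative unital ring, $R$ a commutative associative unital $k$-algebra and $B$ an $R$-algebra. Assume $\beta\in\mathrm{IBF}_{(R,k)}(B)$ is nonsingular. Then $\mathrm{Cent}_R(B)\cong\mathrm{IBF}_{(R,k)}(B)$ as $R$-modules. If furthermore $B$ is a central $R$-algebra, then $\mathrm{IBF}_{(R,k)}(B)$ is a free $R$-module of rank $1$ with basis $\beta$: $\mathrm{IBF}_{(R,k)}(B)=R\beta\cong R$.
   Context: An $R$-algebra is an $R$-module with an $R$-bilinear product (no identities assumed). A $k$-bilinear map $\beta\colon B\times B\to k$ is $(R,k)$-bilinear if $\beta(rb_1,b_2)=\beta(b_1,rb_2)$ for $r\in R$; it is invariant if $\beta(ab,c)=\beta(a,bc)=\beta(b,ca)$. $\mathrm{IBF}_{(R,k)}(B)$ is the $R$-module of invariant $(R,k)$-bilinear maps $B\times B\to k$, with $(r\beta)(b_1,b_2)=\beta(rb_1,b_2)$. $\beta$ is nonsingular if the $R$-linear map $B\to B^*=\mathrm{Hom}_k(B,k)$, $b\mapsto\beta(b,-)$, is bijective (where $(r\varphi)(b)=\varphi(rb)$). $\mathrm{Cent}_R(B)=\{\chi\in\mathrm{End}_R(B):\chi(ab)=a\chi(b)=\chi(a)b\}$; $B$ is central if $R\to\mathrm{Cent}_R(B)$, $r\mapsto(b\mapsto rb)$, is an isomorphism. *)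

(* Defs.v *)
From HB Require Import structures.
From mathcomp Require Import all_boot all_algebra.
Set Implicit Arguments. Unset Strict Implicit. Unset Printing Implicit Defensive.
Import GRing.Theory.
Local Open Scope ring_scope.

(* Setting: k, R commutative unital rings (possibly zero), the k-algebra
   structure of R given by a unital ring morphism phi : k -> R, B an R-module
   with a product mul : B -> B -> B (no associativity/identity assumed).
   B is a k-module by restriction of scalars: c . b := phi c *: b. *)

Section Defs.
Variables (k R : comPzRingType) (phi : {rmorphism k -> R}) (B : lmodType R).

Definition kscale (c : k) (b : B) : B := phi c *: b.

Definition Rbilinear_prod (mul : B -> B -> B) : Prop :=
  [/\ forall a b c, mul (a + b) c = mul a c + mul b c,
      forall a b c, mul a (b + c) = mul a b + mul a c,
      forall (r : R) a b, mul (r *: a) b = r *: mul a b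
    & forall (r : R) a b, mul a (r *: b) = r *: mul a b].

Definition kbilinear (beta : B -> B -> k) : Prop :=
  [/\ forall a b c, beta (a + b) c = beta a c + beta b c,
      forall a b c, beta a (b + c) = beta a b + beta a c,
      forall (x : k) a b, beta (kscale x a) b = x * beta a b
    & forall (x : k) a b, beta a (kscale x b) = x * beta a b].

Definition RKbilinear (beta : B -> B -> k) : Prop :=
  kbilinear beta /\ forall (r : R) a b, beta (r *: a) b = beta a (r *: b).

Definition invariant (mul : B -> B -> B) (beta : B -> B -> k) : Prop :=
  forall a b c, beta (mul a b) c = beta a (mul b c) /\
                beta a (mul b c) = beta b (mul c a).

Definition IBF (mul : B -> B -> B) (beta : B -> B -> k) : Prop :=
  RKbilinear beta /\ invariant mul beta.

Definition ibf_scale (r : R) (beta : B -> B -> k) : B -> B -> k :=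
  fun b1 b2 => beta (r *: b1) b2.
Definition ibf_add (beta gamma : B -> B -> k) : B -> B -> k :=
  fun b1 b2 => beta b1 b2 + gamma b1 b2.

Definition klinear_form (f : B -> k) : Prop :=
  (forall a b, f (a + b) = f a + f b) /\ (forall (x : k) a, f (kscale x a) = x * f a).

Definition nonsingular (beta : B -> B -> k) : Prop :=
  (forall b b', beta b = beta b' -> b = b') /\
  (forall f : B -> k, klinear_form f -> exists b, beta b = f).

Definition Rlinear_end (chi : B -> B) : Prop :=
  (forall a b, chi (a + b) = chi a + chi b) /\ (forall (r : R) a, chi (r *: a) = r *: chi a).
Definition Cent (mul : B -> B -> B) (chi : B -> B) : Prop :=
  Rlinear_end chi /\ forall a b, chi (mul a b) = mul a (chi b) /\ mul a (chi b) = mul (chi a) b.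

Definition cent_scale (r : R) (chi : B -> B) : B -> B := fun b => r *: chi b.
Definition cent_add (chi psi : B -> B) : B -> B := fun b => chi b + psi b.

Definition central (mul : B -> B -> B) : Prop :=
  (forall r r' : R, (fun b : B => r *: b) = (fun b => r' *: b) -> r = r') /\
  (forall chi, Cent mul chi -> exists r : R, chi = (fun b => r *: b)).

(* an R-module isomorphism between the submodules Cent_R(B) of (B -> B)
   and IBF_(R,k)(B) of (B -> B -> k) *)
Definition Rmod_iso_Cent_IBF (mul : B -> B -> B)
    (F : (B -> B) -> (B -> B -> k)) : Prop :=
  [/\ forall chi, Cent mul chi -> IBF mul (F chi),
      forall chi psi, Cent mul chi -> Cent mul psi ->
        F (cent_add chi psi) = ibf_add (F chi) (F psi),
      forall r chi, Cent mul chi -> F (cent_scale r chi) = ibf_scale r (F chi),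
      forall chi psi, Cent mul chi -> Cent mul psi -> F chi = F psi -> chi = psi
    & forall gamma, IBF mul gamma -> exists2 chi, Cent mul chi & F chi = gamma].

End Defs.

(* Main.v *)
Require Import Defs.
From HB Require Import structures.
From Stdlib Require Import FunctionalExtensionality ClassicalEpsilon.
From mathcomp Require Import all_boot all_algebra.
Import GRing.Theory.
Local Open Scope ring_scope.

Theorem corollary3p8 (k R : comPzRingType) (phi : {rmorphism k -> R})
  (B : lmodType R) (mul : B -> B -> B) (beta : B -> B -> k) :
  Rbilinear_prod mul ->
  IBF phi mul beta ->
  nonsingular phi beta ->
  (exists F : (B -> B) -> (B -> B -> k), Rmod_iso_Cent_IBF phi mul F) /\
  (central mul ->
     (forall gamma, IBF phi mul gamma -> exists r : R, gamma = ibf_scale r beta) /\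
     (forall r r' : R, ibf_scale r beta = ibf_scale r' beta -> r = r')).
Proof.
move=> [mD1 mD2 mZ1 mZ2] [[[bD1 bD2 bZ1 bZ2] bRK] binv] [binj bsurj].
have cyc : forall x y z, beta x (mul y z) = beta z (mul x y).
  by move=> x y z; rewrite (proj2 (binv x y z)) (proj2 (binv y z x)).
have assoc : forall x y z, beta (mul x y) z = beta x (mul y z).
  by move=> x y z; rewrite (proj1 (binv x y z)).
pose F := fun (chi : B -> B) (b1 b2 : B) => beta (chi b1) b2.
have Fsurj : forall gamma, IBF phi mul gamma -> exists2 chi, Cent mul chi & F chi = gamma.
  move=> gamma [[[gD1 gD2 gZ1 gZ2] gRK] ginv].
  have gcyc : forall x y z, gamma x (mul y z) = gamma z (mul x y).
    by move=> x y z; rewrite (proj2 (ginv x y z)) (proj2 (ginv y z x)).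
  have ex : forall b, exists c, beta c = gamma b.
    by move=> b; apply: bsurj; split; [exact: gD2 | move=> x c; exact: gZ2].
  pose chi := fun b => proj1_sig (constructive_indefinite_description _ (ex b)).
  have chiE : forall b, beta (chi b) = gamma b.
    by move=> b; rewrite /chi; case: constructive_indefinite_description.
  have ext : forall u v, (forall y, beta u y = beta v y) -> u = v.
    by move=> u v H; apply: binj; apply: functional_extensionality.
  exists chi; last first.
    by apply: functional_extensionality => b1; apply: functional_extensionality => b2; rewrite /F chiE.
  split; first split.
  - move=> a b; apply: ext => y; by rewrite bD1 !chiE gD1.
  - move=> r a; apply: ext => y; by rewrite bRK !chiE gRK.
  have gassoc : forall x y z, gamma (mul x y) z = gamma x (mul y z).
    by move=> x y z; rewrite (proj1 (ginv x y z)).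
  move=> a b; split.
  - apply: ext => y; rewrite chiE assoc -cyc chiE gassoc.
    by rewrite -gcyc.
  - apply: ext => y; rewrite !assoc -cyc !chiE.
    by rewrite -gcyc.
have Finj : forall chi psi, F chi = F psi -> chi = psi.
  move=> chi psi E; apply: functional_extensionality => b; apply: binj.
  exact: (f_equal (fun G => G b) E).
split.
  exists F; split.
  - move=> chi [[cD cZ] cC]; split; first split; first split.
    + by move=> a b c; rewrite /F cD bD1.
    + by move=> a b c; rewrite /F bD2.
    + by move=> x a b; rewrite /F /kscale cZ -/(kscale phi x (chi a)) bZ1.
    + by move=> x a b; rewrite /F bZ2.
    + by move=> r a b; rewrite /F cZ bRK.
    move=> a b c; rewrite /F; split.
    + by rewrite (proj1 (cC a b)) (proj2 (cC a b)) assoc.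
    + by rewrite (proj2 (binv (chi b) c a)) (proj2 (cC a b)) (proj2 (binv c (chi a) b)).
  - by move=> chi psi _ _; rewrite /F /cent_add /ibf_add;
      apply: functional_extensionality => b1; apply: functional_extensionality => b2; rewrite bD1.
  - by move=> r chi [[cD cZ] _]; rewrite /F /cent_scale /ibf_scale;
      apply: functional_extensionality => b1; apply: functional_extensionality => b2; rewrite cZ.
  - by move=> chi psi _ _; apply: Finj.
  - exact: Fsurj.
move=> [cinj csurj]; split.
  move=> gamma Hg; have [chi Cc <-] := Fsurj gamma Hg.
  have [r ->] := csurj chi Cc.
  by exists r.
move=> r r' E; apply: (cinj r r'); apply: functional_extensionality => b.
apply: binj; apply: functional_extensionality => y.
have := f_equal (fun G => G b y) E; rewrite /ibf_scale /=; by [].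
Qed.
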